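(* Let $\mathcal{A}$ be an alternative $W^{*}$-factor, $\mathcal{B}$ an alternative complex $\ast$-algebra, and $\Phi:\mathcal{A}\to\mathcal{B}$ a bijection preserving product $ab+ba^{*}$ (resp. $ab-ba^{*}$). Let $p_{1}\in\mathcal{A}$ be a projection with $p_{1}\neq 1_{\mathcal{A}}$, $p_{2}=1_{\mathcal{A}}-p_{1}$, and $\mathcal{A}_{ij}=p_{i}\mathcal{A}p_{j}$. Then for all $a_{11}\in\mathcal{A}_{11}$, $b_{12}\in\mathcal{A}_{12}$, $c_{21}\in\mathcal{A}_{21}$, $d_{22}\in\mathcal{A}_{22}$: (i) $\Phi(a_{11}+b_{12})=\Phi(a_{11})+\Phi(b_{12})$; (ii) $\Phi(a_{11}+c_{21})=\Phi(a_{11})+\Phi(c_{21})$; (iii) $\Phi(b_{12}+d_{22})=\Phi(b_{12})+\Phi(d_{22})$; (iv) $\Phi(c_{21}+d_{22})=\Phi(c_{21})+\Phi(d_{22})$.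
   Context: An alternative $W^{*}$-factor is a prime alternative $C^{*}$-algebra (complete normed alternative complex $\ast$-algebra with $\|a^{*}a\|=\|a\|^{2}$) that is a dual Banach space; it is unital. A projection is a nonzero self-adjoint idempotent. $\mathcal{A}=\mathcal{A}_{11}\oplus\mathcal{A}_{12}\oplus\mathcal{A}_{21}\oplus\mathcal{A}_{22}$ is the Peirce decomposition with respect to $p_{1}$. $\Phi$ preserves product $ab+ba^{*}$ (resp. $ab-ba^{*}$) if $\Phi(ab+ba^{*})=\Phi(a)\Phi(b)+\Phi(b)\Phi(a)^{*}$ (resp. $\Phi(ab-ba^{*})=\Phi(a)\Phi(b)-\Phi(b)\Phi(a)^{*}$) for all $a,b\in\mathcal{A}$. *)

(* Defs.v *)
From mathcomp Require Import all_boot all_order all_algebra.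
From mathcomp Require Import complex.
From mathcomp Require Import all_classical all_reals all_analysis.
Import Order.TTheory GRing.Theory Num.Theory ComplexField.
Import numFieldNormedType.Exports.
Set Implicit Arguments. Unset Strict Implicit. Unset Printing Implicit Defensive.
Local Open Scope ring_scope.
Local Open Scope classical_set_scope.

Section Defs.
Variable R : realType.
Local Notation C := R[i].

Definition complex_star_algebra (V : lmodType C) (mul : V -> V -> V)
  (star : V -> V) : Prop :=
  [/\ (forall (k : C) (a b c : V), mul (k *: a + b) c = k *: mul a c + mul b c),
      (forall (k : C) (a b c : V), mul a (k *: b + c) = k *: mul a b + mul a c),
      (forall (k : C) (a b : V), star (k *: a + b) = k^* *: star a + star b),
      (forall a : V, star (star a) = a) &
      (forall a b : V, star (mul a b) = mul (star b) (star a))].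

Definition alternative (V : Type) (mul : V -> V -> V) : Prop :=
  (forall x y : V, mul x (mul x y) = mul (mul x x) y) /\
  (forall x y : V, mul (mul y x) x = mul y (mul x x)).

Definition alternative_star_algebra (V : lmodType C) (mul : V -> V -> V)
  (star : V -> V) : Prop :=
  complex_star_algebra mul star /\ alternative mul.

Definition is_ideal (V : lmodType C) (mul : V -> V -> V) (I : set V) : Prop :=
  [/\ I 0, (forall (k : C) a b, I a -> I b -> I (k *: a + b)),
      (forall a x, I x -> I (mul a x)) & (forall a x, I x -> I (mul x a))].

Definition prime_alg (V : lmodType C) (mul : V -> V -> V) : Prop :=
  forall I J : set V, is_ideal mul I -> is_ideal mul J ->
    (forall x y, I x -> J y -> mul x y = 0) -> I = [set 0] \/ J = [set 0].

Definition bounded_linear_functional (X : normedModType C) (f : X -> C) : Prop :=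
  (forall (k : C) (x y : X), f (k *: x + y) = k * f x + f y) /\
  exists M : C, forall x : X, `|f x| <= M * `|x|.

(* A is a dual Banach space: it is isometrically (linearly) isomorphic to the
   Banach dual X^* of some normed space X (norm of X^* = operator norm). *)
Definition dual_Banach_space (A : normedModType C) : Prop :=
  exists (X : normedModType C) (T : A -> X -> C),
  [/\ (forall (k : C) (a b : A), T (k *: a + b) = fun x => k * T a x + T b x),
      (forall a, bounded_linear_functional (T a)),
      (forall f, bounded_linear_functional f -> exists a, T a = f) &
      (forall a : A,
        (forall x : X, `|x| <= 1 -> `|T a x| <= `|a|) /\
        (forall M : C, (forall x : X, `|x| <= 1 -> `|T a x| <= M) -> `|a| <= M))].

Definition alternative_Cstar_algebra (A : completeNormedModType C)
  (mul : A -> A -> A) (star : A -> A) : Prop :=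
  [/\ alternative_star_algebra mul star,
      (forall a b : A, `|mul a b| <= `|a| * `|b|) &
      (forall a : A, `|mul (star a) a| = `|a| ^+ 2)].

Definition alternative_Wstar_factor (A : completeNormedModType C)
  (mul : A -> A -> A) (star : A -> A) (one : A) : Prop :=
  [/\ alternative_Cstar_algebra mul star, prime_alg mul, dual_Banach_space A &
      (forall a, mul one a = a /\ mul a one = a)].

Definition projection (V : lmodType C) (mul : V -> V -> V) (star : V -> V)
  (p : V) : Prop :=
  [/\ p != 0, star p = p & mul p p = p].

Definition peirce (V : lmodType C) (mul : V -> V -> V) (p q : V) (x : V) : Prop :=
  exists a : V, x = mul (mul p a) q.

End Defs.

(* Main.v *)
Require Import Defs.
From mathcomp Require Import all_boot all_order all_algebra.
From mathcomp Require Import complex.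
From mathcomp Require Import all_classical all_reals all_analysis.
From mathcomp Require Import ring.
Import Order.TTheory GRing.Theory Num.Theory ComplexField.
Import numFieldNormedType.Exports.
Local Open Scope ring_scope.


Lemma mul0l_ {R : realType} {V : lmodType R[i]} {mul : V -> V -> V} {star : V -> V}
  (H : complex_star_algebra mul star) c : mul 0 c = 0.
Proof.
case: H => Hl _ _ _ _; have := Hl (-1) c c c.
by rewrite scaleN1r addNr scaleN1r addNr.
Qed.

Lemma mul0r_ {R : realType} {V : lmodType R[i]} {mul : V -> V -> V} {star : V -> V}
  (H : complex_star_algebra mul star) c : mul c 0 = 0.
Proof.
case: H => _ Hr _ _ _; have := Hr (-1) c c c.
by rewrite scaleN1r addNr scaleN1r addNr.
Qed.

Lemma mulDl_ {R : realType} {V : lmodType R[i]} {mul : V -> V -> V} {star : V -> V}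
  (H : complex_star_algebra mul star) a b c : mul (a + b) c = mul a c + mul b c.
Proof. case: H => Hl _ _ _ _; have := Hl 1 a b c; rewrite !scale1r; apply. Qed.

Lemma mulDr_ {R : realType} {V : lmodType R[i]} {mul : V -> V -> V} {star : V -> V}
  (H : complex_star_algebra mul star) a b c : mul a (b + c) = mul a b + mul a c.
Proof. case: H => _ Hr _ _ _; have := Hr 1 a b c; rewrite !scale1r; apply. Qed.

Lemma mulZl_ {R : realType} {V : lmodType R[i]} {mul : V -> V -> V} {star : V -> V}
  (H : complex_star_algebra mul star) k a c : mul (k *: a) c = k *: mul a c.
Proof. have := mul0l_ H c; case: H => Hl _ _ _ _ h; have := Hl k a 0 c; rewrite !addr0 h addr0; apply. Qed.

Lemma mulZr_ {R : realType} {V : lmodType R[i]} {mul : V -> V -> V} {star : V -> V}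
  (H : complex_star_algebra mul star) k a c : mul a (k *: c) = k *: mul a c.
Proof. have := mul0r_ H a; case: H => _ Hr _ _ _ h; have := Hr k a c 0; rewrite !addr0 h addr0; apply. Qed.

Lemma mulNl_ {R : realType} {V : lmodType R[i]} {mul : V -> V -> V} {star : V -> V}
  (H : complex_star_algebra mul star) a c : mul (- a) c = - mul a c.
Proof. by rewrite -scaleN1r (mulZl_ H) scaleN1r. Qed.

Lemma mulNr_ {R : realType} {V : lmodType R[i]} {mul : V -> V -> V} {star : V -> V}
  (H : complex_star_algebra mul star) a c : mul a (- c) = - mul a c.
Proof. by rewrite -scaleN1r (mulZr_ H) scaleN1r. Qed.

Lemma mulBl_ {R : realType} {V : lmodType R[i]} {mul : V -> V -> V} {star : V -> V}
  (H : complex_star_algebra mul star) a b c : mul (a - b) c = mul a c - mul b c.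
Proof. by rewrite (mulDl_ H) (mulNl_ H). Qed.

Lemma mulBr_ {R : realType} {V : lmodType R[i]} {mul : V -> V -> V} {star : V -> V}
  (H : complex_star_algebra mul star) a b c : mul a (b - c) = mul a b - mul a c.
Proof. by rewrite (mulDr_ H) (mulNr_ H). Qed.

Lemma star0_ {R : realType} {V : lmodType R[i]} {mul : V -> V -> V} {star : V -> V}
  (H : complex_star_algebra mul star) : star 0 = 0.
Proof.
case: H => _ _ Hs _ _; have := Hs (-1) 0 0.
by rewrite rmorphN1 !scaleN1r oppr0 add0r addNr.
Qed.

Lemma starD_ {R : realType} {V : lmodType R[i]} {mul : V -> V -> V} {star : V -> V}
  (H : complex_star_algebra mul star) a b : star (a + b) = star a + star b.
Proof. case: H => _ _ Hs _ _; have := Hs 1 a b; rewrite rmorph1 !scale1r; apply. Qed.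

Lemma starZ_ {R : realType} {V : lmodType R[i]} {mul : V -> V -> V} {star : V -> V}
  (H : complex_star_algebra mul star) k a : star (k *: a) = k^* *: star a.
Proof. have := star0_ H; case: H => _ _ Hs _ _ h; have := Hs k a 0; rewrite !addr0 h addr0; apply. Qed.

Lemma starN_ {R : realType} {V : lmodType R[i]} {mul : V -> V -> V} {star : V -> V}
  (H : complex_star_algebra mul star) a : star (- a) = - star a.
Proof. by rewrite -scaleN1r (starZ_ H) rmorphN1 scaleN1r. Qed.

Lemma starB_ {R : realType} {V : lmodType R[i]} {mul : V -> V -> V} {star : V -> V}
  (H : complex_star_algebra mul star) a b : star (a - b) = star a - star b.
Proof. by rewrite (starD_ H) (starN_ H). Qed.

Lemma starK_ {R : realType} {V : lmodType R[i]} {mul : V -> V -> V} {star : V -> V}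
  (H : complex_star_algebra mul star) a : star (star a) = a.
Proof. by case: H. Qed.

Lemma starM_ {R : realType} {V : lmodType R[i]} {mul : V -> V -> V} {star : V -> V}
  (H : complex_star_algebra mul star) a b : star (mul a b) = mul (star b) (star a).
Proof. by case: H. Qed.

Definition asc {R : realType} {V : lmodType R[i]} (mul : V -> V -> V) a b c :=
  mul (mul a b) c - mul a (mul b c).

Lemma ascDl {R : realType} {V : lmodType R[i]} {mul : V -> V -> V} {star : V -> V}
  (H : complex_star_algebra mul star) a a' b c :
  asc mul (a + a') b c = asc mul a b c + asc mul a' b c.
Proof. rewrite /asc !(mulDl_ H) addrACA opprD //. Qed.

Lemma ascDm {R : realType} {V : lmodType R[i]} {mul : V -> V -> V} {star : V -> V}
  (H : complex_star_algebra mul star) a b b' c :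
  asc mul a (b + b') c = asc mul a b c + asc mul a b' c.
Proof. rewrite /asc (mulDr_ H) (mulDl_ H) (mulDl_ H) (mulDr_ H) addrACA opprD //. Qed.

Lemma ascDr {R : realType} {V : lmodType R[i]} {mul : V -> V -> V} {star : V -> V}
  (H : complex_star_algebra mul star) a b c c' :
  asc mul a b (c + c') = asc mul a b c + asc mul a b c'.
Proof. rewrite /asc !(mulDr_ H) addrACA opprD //. Qed.

Lemma asc_swap12 {R : realType} {V : lmodType R[i]} {mul : V -> V -> V} {star : V -> V}
  (H : complex_star_algebra mul star) (Ha : alternative mul) a b c :
  asc mul a b c = - asc mul b a c.
Proof.
have z : forall x y, asc mul x x y = 0.
  by move=> x y; rewrite /asc Ha.1 subrr.
have := z (a + b) c; rewrite (ascDl H) !(ascDm H) !z add0r addr0.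
by move/eqP; rewrite addr_eq0 => /eqP.
Qed.

Lemma asc_swap23 {R : realType} {V : lmodType R[i]} {mul : V -> V -> V} {star : V -> V}
  (H : complex_star_algebra mul star) (Ha : alternative mul) a b c :
  asc mul a b c = - asc mul a c b.
Proof.
have z : forall x y, asc mul y x x = 0.
  by move=> x y; rewrite /asc Ha.2 subrr.
have := z (b + c) a; rewrite (ascDr H) !(ascDm H) !z add0r addr0.
move/eqP; rewrite addr_eq0 => /eqP ->; by rewrite opprK.
Qed.

Lemma asc_cyc {R : realType} {V : lmodType R[i]} {mul : V -> V -> V} {star : V -> V}
  (H : complex_star_algebra mul star) (Ha : alternative mul) a b c :
  asc mul a b c = asc mul b c a.
Proof. by rewrite (asc_swap12 H Ha) (asc_swap23 H Ha) opprK. Qed.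

Record AltAlg {R : realType} {V : lmodType R[i]} (mul : V -> V -> V) (star : V -> V)
  (one p : V) : Prop := {
  aH : complex_star_algebra mul star;
  aA : alternative mul;
  aU : forall a, mul one a = a /\ mul a one = a;
  aP : mul p p = p;
  aS : star p = p }.

Definition Pc {R : realType} {V : lmodType R[i]} (mul : V -> V -> V) (p : V)
  (a b : R[i]) (z : V) := mul p z = a *: z /\ mul z p = b *: z.

Lemma pc_mul {R : realType} {V : lmodType R[i]} {mul : V -> V -> V} {star : V -> V}
  {one p : V} (X : AltAlg mul star one p) {a b c d e f : R[i]} {z y : V} :
  Pc mul p a b z -> Pc mul p c d y -> a + b - c = e -> d - b + c = f ->
  Pc mul p e f (mul z y).
Proof.
case: X => H Ha _ _ _ [hz1 hz2] [hy1 hy2] <- <-.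
have h : asc mul z p y = (b - c) *: mul z y.
  by rewrite /asc hz2 hy1 (mulZl_ H) (mulZr_ H) scalerBl.
split.
- have := asc_swap12 H Ha p z y; rewrite h /asc hz1 (mulZl_ H) => E.
  have -> : mul p (mul z y) = a *: mul z y - (a *: mul z y - mul p (mul z y)).
    by rewrite opprB addrC subrK.
  by rewrite E opprK -scalerDl; congr (_ *: _); ring.
- have := asc_swap23 H Ha z y p; rewrite h /asc hy2 (mulZr_ H) => E.
  have -> : mul (mul z y) p = (mul (mul z y) p - d *: mul z y) + d *: mul z y.
    by rewrite subrK.
  by rewrite E -scaleNr -scalerDl; congr (_ *: _); ring.
Qed.

Lemma scale_id0 {R : realType} {V : lmodType R[i]} (k : R[i]) (w : V) :
  k * k != k -> k *: (k *: w) = k *: w -> w = 0.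
Proof.
move=> hk; rewrite scalerA => /eqP; rewrite -subr_eq0 -scalerBl.
rewrite scaler_eq0 subr_eq0 (negPf hk) /= => /eqP //.
Qed.

Lemma pc_zeroL {R : realType} {V : lmodType R[i]} {mul : V -> V -> V} {star : V -> V}
  {one p : V} (X : AltAlg mul star one p) {a b : R[i]} {w : V} :
  Pc mul p a b w -> a * a != a -> w = 0.
Proof.
case: X => H Ha _ Hp _ [h1 _] ha; apply: (@scale_id0 R V _ w ha).
by rewrite -h1 -(mulZr_ H) -h1 Ha.1 Hp.
Qed.

Lemma pc_zeroR {R : realType} {V : lmodType R[i]} {mul : V -> V -> V} {star : V -> V}
  {one p : V} (X : AltAlg mul star one p) {a b : R[i]} {w : V} :
  Pc mul p a b w -> b * b != b -> w = 0.
Proof.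
case: X => H Ha _ Hp _ [_ h1] ha; apply: (@scale_id0 R V _ w ha).
by rewrite -h1 -(mulZl_ H) -h1 Ha.2 Hp.
Qed.

Lemma c2 (R : realType) : (2:R[i]) * 2 != 2.
Proof. rewrite -subr_eq0. have -> : (2:R[i]) * 2 - 2 = 2 by ring. by rewrite pnatr_eq0. Qed.
Lemma cm1 (R : realType) : (-1:R[i]) * -1 != -1.
Proof. rewrite -subr_eq0. have -> : (-1:R[i]) * -1 - -1 = 2 by ring. by rewrite pnatr_eq0. Qed.

Lemma pc_mul0 {R : realType} {V : lmodType R[i]} {mul : V -> V -> V} {star : V -> V}
  {one p : V} (X : AltAlg mul star one p) {a b c d k : R[i]} {z y : V} :
  Pc mul p a b z -> Pc mul p c d y ->
  (a + b - c = k \/ d - b + c = k) -> (k = 2 \/ k = -1) -> mul z y = 0.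
Proof.
move=> hz hy hk hk2.
have hkk : k * k != k by case: hk2 => ->; [apply: c2 | apply: cm1].
case: hk => hk.
- exact: (pc_zeroL X (pc_mul X hz hy hk (erefl _)) hkk).
- exact: (pc_zeroR X (pc_mul X hz hy (erefl _) hk) hkk).
Qed.

Lemma pc_lin {R : realType} {V : lmodType R[i]} {mul : V -> V -> V} {star : V -> V}
  {one p : V} (X : AltAlg mul star one p) (k : R[i]) {a b : R[i]} {z z' : V} :
  Pc mul p a b z -> Pc mul p a b z' -> Pc mul p a b (k *: z + z').
Proof.
case: X => H _ _ _ _ [h1 h2] [h1' h2']; split.
- by rewrite (mulDr_ H) (mulZr_ H) h1 h1' scalerDr !scalerA mulrC.
- by rewrite (mulDl_ H) (mulZl_ H) h2 h2' scalerDr !scalerA mulrC.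
Qed.

Lemma pc_0 {R : realType} {V : lmodType R[i]} {mul : V -> V -> V} {star : V -> V}
  {one p : V} (X : AltAlg mul star one p) a b : Pc mul p a b 0.
Proof. case: X => H _ _ _ _; by rewrite /Pc (mul0l_ H) (mul0r_ H) !scaler0. Qed.

Lemma pc_star {R : realType} {V : lmodType R[i]} {mul : V -> V -> V} {star : V -> V}
  {one p : V} (X : AltAlg mul star one p) {a b : R[i]} {z : V} :
  Pc mul p a b z -> Pc mul p b^* a^* (star z).
Proof.
case: X => H _ _ _ Hs [h1 h2]; split.
- by rewrite -{1}Hs -(starM_ H) h2 (starZ_ H).
- by rewrite -{1}Hs -(starM_ H) h1 (starZ_ H).
Qed.

Lemma pc_star11 {R : realType} {V : lmodType R[i]} {mul : V -> V -> V} {star : V -> V}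
  {one p : V} (X : AltAlg mul star one p) {z : V} : Pc mul p 1 1 z -> Pc mul p 1 1 (star z).
Proof. by move/(pc_star X); rewrite rmorph1. Qed.
Lemma pc_star10 {R : realType} {V : lmodType R[i]} {mul : V -> V -> V} {star : V -> V}
  {one p : V} (X : AltAlg mul star one p) {z : V} : Pc mul p 1 0 z -> Pc mul p 0 1 (star z).
Proof. by move/(pc_star X); rewrite rmorph1 rmorph0. Qed.
Lemma pc_star01 {R : realType} {V : lmodType R[i]} {mul : V -> V -> V} {star : V -> V}
  {one p : V} (X : AltAlg mul star one p) {z : V} : Pc mul p 0 1 z -> Pc mul p 1 0 (star z).
Proof. by move/(pc_star X); rewrite rmorph1 rmorph0. Qed.

Lemma pL {R : realType} {V : lmodType R[i]} {mul : V -> V -> V} {star : V -> V}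
  {one p : V} (X : AltAlg mul star one p) y : mul p (mul p y) = mul p y.
Proof. by case: X => _ Ha _ Hp _; rewrite Ha.1 Hp. Qed.
Lemma pR {R : realType} {V : lmodType R[i]} {mul : V -> V -> V} {star : V -> V}
  {one p : V} (X : AltAlg mul star one p) y : mul (mul y p) p = mul y p.
Proof. by case: X => _ Ha _ Hp _; rewrite Ha.2 Hp. Qed.
Lemma pflex {R : realType} {V : lmodType R[i]} {mul : V -> V -> V} {star : V -> V}
  {one p : V} (X : AltAlg mul star one p) y : mul p (mul y p) = mul (mul p y) p.
Proof.
case: X => H Ha _ Hp _.
have := asc_swap23 H Ha p y p; rewrite {2}/asc Ha.1 subrr oppr0 /asc.
by move/eqP; rewrite subr_eq0 => /eqP.
Qed.

Lemma decomp {R : realType} {V : lmodType R[i]} {mul : V -> V -> V} {star : V -> V}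
  {one p : V} (X : AltAlg mul star one p) x :
  exists a11 a12 a21 a22, [/\ Pc mul p 1 1 a11, Pc mul p 1 0 a12, Pc mul p 0 1 a21,
     Pc mul p 0 0 a22 & x = a11 + a12 + a21 + a22].
Proof.
case: (X) => H _ _ _ _.
exists (mul p (mul x p)), (mul p x - mul p (mul x p)), (mul x p - mul p (mul x p)),
  (x - mul p x - mul x p + mul p (mul x p)).
have e1 := pL X; have e2 := pR X; have e3 := pflex X.
split.
- rewrite /Pc !scale1r; split; first by rewrite e1.
  by rewrite e3 e2.
- rewrite /Pc scale1r scale0r (mulBr_ H) (mulBl_ H) e1 e1; split => //.
  by rewrite e3 e2 subrr.
- rewrite /Pc scale1r scale0r (mulBr_ H) (mulBl_ H) e1 e2; split.
    by rewrite subrr.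
  by rewrite e3 e2.
- rewrite /Pc scale0r; split.
    rewrite !(mulDr_ H) !(mulNr_ H) !e1.
    by rewrite subrr sub0r addNr.
  rewrite !(mulDl_ H) !(mulNl_ H) e2 e3 e2.
  by rewrite (addrAC (mul x p)) subrr sub0r addNr.
- rewrite (addrC (mul p (mul x p))) subrK addrACA subrK addrA subrK (addrC (mul p x)) subrK //.
Qed.

Lemma ascE {R : realType} {V : lmodType R[i]} (mul : V -> V -> V) a b c :
  mul (mul a b) c = asc mul a b c + mul a (mul b c).
Proof. by rewrite /asc subrK. Qed.
Lemma ascE' {R : realType} {V : lmodType R[i]} (mul : V -> V -> V) a b c :
  mul a (mul b c) = mul (mul a b) c - asc mul a b c.
Proof. by rewrite /asc opprB addrC subrK. Qed.

Lemma ann_ideal {R : realType} {V : lmodType R[i]} {mul : V -> V -> V} {star : V -> V}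
  (H : complex_star_algebra mul star) (Ha : alternative mul) (I : set V) :
  is_ideal mul I -> is_ideal mul (fun w => forall z, I z -> mul z w = 0 /\ mul w z = 0).
Proof.
case=> I0 Il IL IR.
have aux : forall w a z, (forall z, I z -> mul z w = 0 /\ mul w z = 0) -> I z ->
    asc mul w z a = 0.
  move=> w a z Hw Iz; rewrite /asc (Hw z Iz).2 (Hw _ (IR a z Iz)).2.
  by rewrite (mul0l_ H) subrr.
split.
- by move=> z _; rewrite (mul0l_ H) (mul0r_ H).
- move=> k a b Ha' Hb z Iz; have [h1 h2] := Ha' z Iz; have [h3 h4] := Hb z Iz.
  by rewrite (mulDr_ H) (mulZr_ H) (mulDl_ H) (mulZl_ H) h1 h2 h3 h4 scaler0 addr0.
- move=> a w Hw z Iz; split.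
  + by rewrite ascE' (Hw _ (IR a z Iz)).1 (asc_cyc H Ha) (asc_cyc H Ha) aux // subrr.
  + by rewrite ascE (Hw z Iz).2 (mul0r_ H) addr0 (asc_cyc H Ha) aux.
- move=> a w Hw z Iz.
  have e : asc mul w a z = 0.
    by rewrite (asc_swap12 H Ha) (asc_cyc H Ha) aux // oppr0.
  split.
  + by rewrite ascE' (Hw z Iz).1 (mul0l_ H) (asc_cyc H Ha) e subrr.
  + by rewrite ascE e add0r (Hw _ (IL a z Iz)).2.
Qed.

Ltac z0l X h1 h2 k :=
  apply: (pc_mul0 X h1 h2 (k:=k)); [ left; ring | by [left|right] ].
Ltac z0r X h1 h2 k :=
  apply: (pc_mul0 X h1 h2 (k:=k)); [ right; ring | by [left|right] ].

Lemma prime_kill {R : realType} {V : lmodType R[i]} {mul : V -> V -> V} {star : V -> V}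
  {one p : V} (X : AltAlg mul star one p) (Hpr : prime_alg mul) (Hp1 : p != one)
  (s : V) :
  Pc mul p 1 1 s -> (forall y, Pc mul p 1 0 y -> mul s y = 0) ->
  (forall v, Pc mul p 0 1 v -> mul v s = 0) -> s = 0.
Proof.
move=> hs hs1 hs2.
case: (X) => H Ha Hu _ _.
pose I0 := fun z => [/\ Pc mul p 1 1 z, (forall y, Pc mul p 1 0 y -> mul z y = 0) &
    (forall v, Pc mul p 0 1 v -> mul v z = 0)].
have HI : is_ideal mul I0.
  split.
  - split; first exact: (pc_0 X 1 1).
      by move=> y _; rewrite (mul0l_ H).
    by move=> v _; rewrite (mul0r_ H).
  - move=> k a b [a1 a2 a3] [b1 b2 b3]; split.
    + exact: (pc_lin X k a1 b1).
    + by move=> y hy; rewrite (mulDl_ H) (mulZl_ H) a2 // b2 // scaler0 addr0.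
    + by move=> v hv; rewrite (mulDr_ H) (mulZr_ H) a3 // b3 // scaler0 addr0.
  - move=> a x [x1 x2 x3].
    have [a11 [a12 [a21 [a22 [h11 h12 h21 h22 ->]]]]] := decomp X a.
    have -> : mul (a11 + a12 + a21 + a22) x = mul a11 x.
      rewrite !(mulDl_ H) (x3 a21 h21) addr0.
      have -> : mul a12 x = 0 by z0r X h12 x1 (2:R[i]).
      have -> : mul a22 x = 0 by apply: (pc_mul0 X h22 x1 (k:=-1)); [left; ring | right].
      by rewrite !addr0.
    have hax : Pc mul p 1 1 (mul a11 x) by apply: (pc_mul X h11 x1); ring.
    split => //.
    + move=> y hy; rewrite ascE x2 // (mul0r_ H) addr0 (asc_cyc H Ha) /asc x2 //.
      have -> : mul y a11 = 0 by z0r X hy h11 (2:R[i]).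
      by rewrite (mul0l_ H) (mul0r_ H) subrr.
    + move=> v hv; have hva : Pc mul p 0 1 (mul v a11) by apply: (pc_mul X hv h11); ring.
      rewrite ascE' x3 // (asc_cyc H Ha) /asc.
      have -> : mul (mul a11 x) v = 0 by z0l X hax hv (2:R[i]).
      have -> : mul x v = 0 by z0l X x1 hv (2:R[i]).
      by rewrite (mul0r_ H) !subrr.
  - move=> a x [x1 x2 x3].
    have [a11 [a12 [a21 [a22 [h11 h12 h21 h22 ->]]]]] := decomp X a.
    have -> : mul x (a11 + a12 + a21 + a22) = mul x a11.
      rewrite !(mulDr_ H) (x2 a12 h12) addr0.
      have -> : mul x a21 = 0 by z0l X x1 h21 (2:R[i]).
      have -> : mul x a22 = 0 by z0l X x1 h22 (2:R[i]).
      by rewrite !addr0.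
    have hxa : Pc mul p 1 1 (mul x a11) by apply: (pc_mul X x1 h11); ring.
    split => //.
    + move=> y hy; have hay : Pc mul p 1 0 (mul a11 y) by apply: (pc_mul X h11 hy); ring.
      rewrite ascE x2 // addr0 (asc_cyc H Ha) (asc_cyc H Ha) /asc.
      have -> : mul y x = 0 by z0r X hy x1 (2:R[i]).
      have -> : mul y (mul x a11) = 0 by z0r X hy hxa (2:R[i]).
      by rewrite (mul0l_ H) subrr.
    + move=> v hv; rewrite ascE' x3 // (mul0l_ H) (asc_cyc H Ha) /asc.
      have -> : mul (mul x a11) v = 0 by z0l X hxa hv (2:R[i]).
      have -> : mul a11 v = 0 by z0l X h11 hv (2:R[i]).
      by rewrite (mul0r_ H) !subrr.
pose J := fun w => forall z, I0 z -> mul z w = 0 /\ mul w z = 0.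
have HJ : is_ideal mul J := ann_ideal H Ha _ HI.
have [E|E] := Hpr _ _ HI HJ (fun x y Ix Jy => (Jy x Ix).1).
  have : I0 s by [].
  by rewrite E.
exfalso.
have Jp : J (one - p).
  move=> z [z1 _ _]; split.
  - by rewrite (mulBr_ H) (Hu z).2 z1.2 scale1r subrr.
  - by rewrite (mulBl_ H) (Hu z).1 z1.1 scale1r subrr.
move: Jp; rewrite E /= => /eqP; rewrite subr_eq0 eq_sym => h.
by move: Hp1; rewrite h.
Qed.

Definition Qm {R : realType} {V : lmodType R[i]} (mul : V -> V -> V) (star : V -> V)
  (eps : R[i]) c y := mul c y + eps *: mul y (star c).
Definition Fm {R : realType} {V : lmodType R[i]} (mul : V -> V -> V) (star : V -> V)
  (eps : R[i]) c y := mul y c + eps *: mul c (star y).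

Lemma Qm_add {R : realType} {V : lmodType R[i]} {mul : V -> V -> V} {star : V -> V}
  (H : complex_star_algebra mul star) eps c y z :
  Qm mul star eps c (y + z) = Qm mul star eps c y + Qm mul star eps c z.
Proof. by rewrite /Qm (mulDr_ H) (mulDl_ H) scalerDr addrACA. Qed.

Lemma Fm_add {R : realType} {V : lmodType R[i]} {mul : V -> V -> V} {star : V -> V}
  (H : complex_star_algebra mul star) eps c y z :
  Fm mul star eps c (y + z) = Fm mul star eps c y + Fm mul star eps c z.
Proof. by rewrite /Fm (mulDl_ H) (starD_ H) (mulDr_ H) scalerDr addrACA. Qed.

Lemma Qm0 {R : realType} {V : lmodType R[i]} {mul : V -> V -> V} {star : V -> V}
  (H : complex_star_algebra mul star) eps c : Qm mul star eps c 0 = 0.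
Proof. by rewrite /Qm (mul0l_ H) (mul0r_ H) scaler0 addr0. Qed.

Lemma Fm0 {R : realType} {V : lmodType R[i]} {mul : V -> V -> V} {star : V -> V}
  (H : complex_star_algebra mul star) eps c : Fm mul star eps c 0 = 0.
Proof. by rewrite /Fm (star0_ H) (mul0l_ H) (mul0r_ H) scaler0 addr0. Qed.

Lemma Qm_cls {R : realType} {V : lmodType R[i]} {mul : V -> V -> V} {star : V -> V}
  {one e : V} (X : AltAlg mul star one e) (eps lam : R[i]) (Hel : eps * lam^* = lam)
  {a b : R[i]} {z : V} :
  Pc mul e a b z -> Qm mul star eps (lam *: e) z = (lam * (a + b)) *: z.
Proof.
case: (X) => H _ _ _ Hs [h1 h2].
rewrite /Qm (starZ_ H) Hs (mulZl_ H) (mulZr_ H) h1 h2 !scalerA.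
by rewrite Hel -scalerDl mulrDr.
Qed.

Lemma Fm_cls {R : realType} {V : lmodType R[i]} {mul : V -> V -> V} {star : V -> V}
  {one e : V} (X : AltAlg mul star one e) (eps : R[i]) {a b : R[i]} {z : V} :
  Pc mul e a b z -> Fm mul star eps e z = b *: z + (eps * b^*) *: star z.
Proof.
move=> hz; have [h1 h2] := hz; have [h3 h4] := pc_star X hz.
by rewrite /Fm h2 h3 scalerA.
Qed.

Lemma pc_comp {R : realType} {V : lmodType R[i]} {mul : V -> V -> V} {star : V -> V}
  {one p : V} (X : AltAlg mul star one p) {a b : R[i]} {z : V} :
  Pc mul p a b z -> Pc mul (one - p) (1 - a) (1 - b) z.
Proof.
case: (X) => H _ Hu _ _ [h1 h2]; split.
- by rewrite (mulBl_ H) (Hu z).1 h1 scalerBl scale1r.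
- by rewrite (mulBr_ H) (Hu z).2 h2 scalerBl scale1r.
Qed.

Lemma pc_scale {R : realType} {V : lmodType R[i]} {mul : V -> V -> V} {star : V -> V}
  {one p : V} (X : AltAlg mul star one p) (k : R[i]) {a b : R[i]} {z : V} :
  Pc mul p a b z -> Pc mul p a b (k *: z).
Proof. move=> h; have := pc_lin X k h (pc_0 X a b); by rewrite addr0. Qed.

Lemma sym0 {R : realType} {V : lmodType R[i]} {mul : V -> V -> V} {star : V -> V}
  {one e : V} (X : AltAlg mul star one e) x :
  mul e x + mul x e = 0 -> Pc mul e 0 0 x.
Proof.
move=> h.
case: (X) => H _ _ _ _.
have h1 : mul e (mul x e) = - mul e x.
  have := congr1 (mul e) h; rewrite (mulDr_ H) (pL X) (mul0r_ H).
  by move/eqP; rewrite addr_eq0 => /eqP ->; rewrite opprK.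
have h2 : mul (mul e x) e = - mul x e.
  have := congr1 (fun w => mul w e) h; rewrite /= (mulDl_ H) (pR X) (mul0l_ H).
  by move/eqP; rewrite addr_eq0 => /eqP.
have h3 : mul e x = mul x e.
  by apply: oppr_inj; rewrite -h1 -h2 (pflex X).
have h4 : mul e x = 0.
  have : (2 : R[i]) *: mul e x = 0 by rewrite scaler_nat mulr2n {2}h3.
  by move/eqP; rewrite scaler_eq0 pnatr_eq0 /= => /eqP.
by split; rewrite scale0r // -h3.
Qed.

Lemma z10 {R : realType} {V : lmodType R[i]} {mul : V -> V -> V} {star : V -> V}
  {one p : V} (X : AltAlg mul star one p) (eps : R[i]) {z : V} :
  Pc mul p 1 0 z -> z + eps *: star z = 0 -> z = 0.
Proof.
move=> hz h; case: (X) => H _ _ _ _.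
have [h3 _] := pc_star10 X hz.
have := congr1 (mul p) h; rewrite (mulDr_ H) (mulZr_ H) h3 hz.1 (mul0r_ H).
by rewrite !scale0r scaler0 addr0 scale1r.
Qed.

Lemma z01 {R : realType} {V : lmodType R[i]} {mul : V -> V -> V} {star : V -> V}
  {one p : V} (X : AltAlg mul star one p) (eps : R[i]) {z : V} :
  Pc mul p 0 1 z -> z + eps *: star z = 0 -> z = 0.
Proof.
move=> hz h; case: (X) => H _ _ _ _.
have [_ h4] := pc_star01 X hz.
have := congr1 (fun w => mul w p) h; rewrite /= (mulDl_ H) (mulZl_ H) h4 hz.2 (mul0l_ H).
by rewrite !scale0r scaler0 addr0 scale1r.
Qed.

Lemma QmE {R : realType} {V : lmodType R[i]} {mul : V -> V -> V} {star : V -> V}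
  (H : complex_star_algebra mul star) (eps lam : R[i]) (Hel : eps * lam^* = lam) e y :
  star e = e -> Qm mul star eps (lam *: e) y = lam *: (mul e y + mul y e).
Proof.
move=> Hs; rewrite /Qm (starZ_ H) Hs (mulZl_ H) (mulZr_ H) scalerA Hel.
by rewrite scalerDr.
Qed.

Lemma Psi_cls {R : realType} {V : lmodType R[i]} {mul : V -> V -> V} {star : V -> V}
  {one p : V} (X : AltAlg mul star one p) (X2 : AltAlg mul star one (one - p))
  (eps lam : R[i]) (Hel : eps * lam^* = lam) {a b : R[i]} {z : V} :
  Pc mul p a b z -> Fm mul star eps (one - p) (Qm mul star eps (lam *: p) z) =
    (1 - b) *: ((lam * (a + b)) *: z) + (eps * (1 - b)^*) *: star ((lam * (a + b)) *: z).
Proof.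
move=> hz; rewrite (Qm_cls X eps lam Hel hz).
exact: (Fm_cls X2 eps (pc_comp X (pc_scale X _ hz))).
Qed.

Lemma back11 {R : realType} {V : lmodType R[i]} {mul : V -> V -> V} {star : V -> V}
  {one p : V} (X2 : AltAlg mul star one (one - p)) {x : V} :
  Pc mul (one - p) 0 0 x -> Pc mul p 1 1 x.
Proof. by move/(pc_comp X2); rewrite subKr subr0. Qed.

Lemma Gq {R : realType} {A B : lmodType R[i]} {mulA : A -> A -> A} {starA : A -> A}
  {mulB : B -> B -> B} {starB : B -> B} (HB : complex_star_algebra mulB starB)
  (Phi : A -> B) (eps : R[i])
  (Hpres : forall a b, Phi (mulA a b + eps *: mulA b (starA a)) =
     mulB (Phi a) (Phi b) + eps *: mulB (Phi b) (starB (Phi a))) c t u v :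
  Phi t = Phi u + Phi v -> Phi (Qm mulA starA eps c t) =
    Phi (Qm mulA starA eps c u) + Phi (Qm mulA starA eps c v).
Proof.
move=> Ht; rewrite /Qm !Hpres Ht (mulDr_ HB) (mulDl_ HB) scalerDr addrACA //.
Qed.

Lemma Gf {R : realType} {A B : lmodType R[i]} {mulA : A -> A -> A} {starA : A -> A}
  {mulB : B -> B -> B} {starB : B -> B} (HB : complex_star_algebra mulB starB)
  (Phi : A -> B) (eps : R[i])
  (Hpres : forall a b, Phi (mulA a b + eps *: mulA b (starA a)) =
     mulB (Phi a) (Phi b) + eps *: mulB (Phi b) (starB (Phi a))) c t u v :
  Phi t = Phi u + Phi v -> Phi (Fm mulA starA eps c t) =
    Phi (Fm mulA starA eps c u) + Phi (Fm mulA starA eps c v).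
Proof.
move=> Ht; rewrite /Fm !Hpres Ht (starD_ HB) (mulDr_ HB) (mulDl_ HB) scalerDr addrACA //.
Qed.

Lemma gen_i {R : realType} {A : lmodType R[i]} {mulA : A -> A -> A} {starA : A -> A}
  {oneA p : A} (X : AltAlg mulA starA oneA p) (X2 : AltAlg mulA starA oneA (oneA - p))
  (Hpr : prime_alg mulA) (Hp1 : p != oneA)
  {B : lmodType R[i]} {mulB : B -> B -> B} {starB : B -> B}
  (HB : complex_star_algebra mulB starB)
  (Phi : A -> B) (Hbij : bijective Phi) (eps lam : R[i]) (He : eps * eps = 1)
  (Hl : lam != 0) (Hel : eps * lam^* = lam)
  (Hpres : forall a b, Phi (mulA a b + eps *: mulA b (starA a)) =
     mulB (Phi a) (Phi b) + eps *: mulB (Phi b) (starB (Phi a))) :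
  forall a b, Pc mulA p 1 1 a -> Pc mulA p 1 0 b -> Phi (a + b) = Phi a + Phi b.
Proof.
case: (X) => H Ha Hu Hp Hs.
have inj := bij_inj Hbij.
case: Hbij => g gK Kg.
have Phi0 : Phi 0 = 0.
  have := Hpres (g 0) 0; rewrite Kg (mul0r_ H) (mul0l_ H) scaler0 addr0.
  by rewrite (star0_ HB) (mul0l_ HB) (mul0r_ HB) scaler0 addr0.
have heps : eps != 0 by apply/eqP => e0; move: He; rewrite e0 mul0r => /eqP; rewrite eq_sym oner_eq0.
have Gq' := Gq HB Phi eps Hpres.
have Gf' := Gf HB Phi eps Hpres.
move=> a b ha hb.
pose t := g (Phi a + Phi b).
have Ht : Phi t = Phi a + Phi b by rewrite Kg.
clearbody t.
have E1 : Qm mulA starA eps (lam *: (oneA - p)) t = lam *: b.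
  have := Gq' (lam *: (oneA - p)) _ _ _ Ht.
  rewrite (Qm_cls X2 eps lam Hel (pc_comp X ha)) (Qm_cls X2 eps lam Hel (pc_comp X hb)).
  rewrite !subrr subr0 !add0r mulr0 mulr1 scale0r Phi0 add0r.
  by apply: inj.
have Hs2 : starA (oneA - p) = oneA - p by case: (X2).
rewrite (QmE H eps lam Hel _ _ Hs2) in E1.
move/scalerI: E1 => /(_ Hl) E1.
pose x := t - b.
have hx : Pc mulA p 1 1 x.
  apply: (back11 X2); apply: (sym0 X2).
  rewrite /x (mulBr_ H (oneA - p) t b) (mulBl_ H t b (oneA - p)) addrACA -opprD E1.
  have [h1 h2] := pc_comp X hb.
  by rewrite h1 h2 subrr subr0 scale0r scale1r add0r subrr.
have ht : t = x + b by rewrite /x subrK.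
clearbody x.
have EF : x + eps *: starA x = a + eps *: starA a.
  have := Gf' p _ _ _ Ht.
  rewrite (Fm_cls X eps hb) rmorph0 mulr0 !scale0r addr0 Phi0 addr0.
  move/inj; rewrite ht (Fm_add H) (Fm_cls X eps hx) (Fm_cls X eps ha) (Fm_cls X eps hb).
  by rewrite rmorph0 rmorph1 mulr0 mulr1 !scale0r !scale1r !addr0.
pose s := x - a.
have hs : Pc mulA p 1 1 s.
  have := pc_lin X (-1) ha hx; by rewrite scaleN1r addrC.
have hss : s + eps *: starA s = 0.
  by rewrite /s (starB_ H) scalerBr addrACA -opprD EF subrr.
have hxs : x = s + a by rewrite /s subrK.
clearbody s.
have K1 : forall y, Pc mulA p 1 0 y -> mulA s y = 0.
  move=> y hy.
  have hv := pc_star10 X hy.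
  pose W := fun w => Fm mulA starA eps (oneA - p) (Qm mulA starA eps (lam *: p)
     (Qm mulA starA eps (starA y) w)).
  have WE : Phi (W t) = Phi (W a) + Phi (W b).
    exact: (Gf' _ _ _ _ (Gq' _ _ _ _ (Gq' _ _ _ _ Ht))).
  have Wadd : forall w w', W (w + w') = W w + W w'.
    by move=> w w'; rewrite /W (Qm_add H) (Qm_add H) (Fm_add H).
  have Wb : W b = 0.
    rewrite /W.
    have -> : Qm mulA starA eps (starA y) b = mulA (starA y) b + eps *: mulA b y.
      by rewrite /Qm (starK_ H).
    rewrite (Qm_add H) (Fm_add H).
    have h1 : Pc mulA p 0 0 (mulA (starA y) b) by apply: (pc_mul X hv hb); ring.
    have h2 : Pc mulA p 0 1 (eps *: mulA b y) by apply: (pc_scale X); apply: (pc_mul X hb hy); ring.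
    rewrite (Psi_cls X X2 eps lam Hel h1) (Psi_cls X X2 eps lam Hel h2).
    by rewrite !subrr ?add0r ?mulr0 ?scale0r ?(star0_ H) ?scaler0 ?rmorph0 ?mulr0 ?scale0r ?addr0.
  rewrite Wb Phi0 addr0 in WE; move/inj: WE.
  rewrite ht hxs !Wadd Wb addr0 => /(congr1 (fun w => w - W a)); rewrite /= addrK subrr => Ws.
  move: Ws; rewrite /W.
  have -> : Qm mulA starA eps (starA y) s = mulA (starA y) s + eps *: mulA s y.
    by rewrite /Qm (starK_ H).
  rewrite (Qm_add H) (Fm_add H).
  have h1 : Pc mulA p 0 1 (mulA (starA y) s) by apply: (pc_mul X hv hs); ring.
  have h2 : Pc mulA p 1 0 (eps *: mulA s y) by apply: (pc_scale X); apply: (pc_mul X hs hy); ring.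
  rewrite (Psi_cls X X2 eps lam Hel h1) (Psi_cls X X2 eps lam Hel h2).
  rewrite !subrr subr0 rmorph0 rmorph1 mulr0 mulr1 !scale0r add0r scale1r addr0 add0r mulr1.
  move/(z10 X eps (pc_scale X _ h2)); move/eqP; rewrite !scaler_eq0 (negPf Hl) (negPf heps) /=.
  by move/eqP.
have sstar : starA s = - eps *: s.
  have : eps *: starA s = - s by apply/eqP; rewrite -addr_eq0 addrC hss.
  move/(congr1 (fun w => eps *: w)); rewrite scalerA He scale1r => ->.
  by rewrite scalerN scaleNr.
have K2 : forall v, Pc mulA p 0 1 v -> mulA v s = 0.
  move=> v hv; rewrite -(starK_ H (mulA v s)) (starM_ H) sstar (mulZl_ H).
  rewrite K1. 2: { have h := pc_star01 X hv; exact h. }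
  transitivity (starA 0); [congr starA; exact: scaler0 | exact: star0_ H].
have s0 := prime_kill X Hpr Hp1 s hs K1 K2.
have xa : x = a by rewrite hxs s0 add0r.
by rewrite -Ht ht xa.
Qed.

Lemma gen_ii {R : realType} {A : lmodType R[i]} {mulA : A -> A -> A} {starA : A -> A}
  {oneA p : A} (X : AltAlg mulA starA oneA p) (X2 : AltAlg mulA starA oneA (oneA - p))
  (Hpr : prime_alg mulA) (Hp1 : p != oneA)
  {B : lmodType R[i]} {mulB : B -> B -> B} {starB : B -> B}
  (HB : complex_star_algebra mulB starB)
  (Phi : A -> B) (Hbij : bijective Phi) (eps lam : R[i]) (He : eps * eps = 1)
  (Hl : lam != 0) (Hel : eps * lam^* = lam)
  (Hpres : forall a b, Phi (mulA a b + eps *: mulA b (starA a)) =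
     mulB (Phi a) (Phi b) + eps *: mulB (Phi b) (starB (Phi a))) :
  forall a c, Pc mulA p 1 1 a -> Pc mulA p 0 1 c -> Phi (a + c) = Phi a + Phi c.
Proof.
case: (X) => H Ha Hu Hp Hs.
have inj := bij_inj Hbij.
case: Hbij => g gK Kg.
have Phi0 : Phi 0 = 0.
  have := Hpres (g 0) 0; rewrite Kg (mul0r_ H) (mul0l_ H) scaler0 addr0.
  by rewrite (star0_ HB) (mul0l_ HB) (mul0r_ HB) scaler0 addr0.
have heps : eps != 0 by apply/eqP => e0; move: He; rewrite e0 mul0r => /eqP; rewrite eq_sym oner_eq0.
have Gq' := Gq HB Phi eps Hpres.
have Gf' := Gf HB Phi eps Hpres.
move=> a c ha hc.
pose t := g (Phi a + Phi c).
have Ht : Phi t = Phi a + Phi c by rewrite Kg.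
clearbody t.
have E1 : Qm mulA starA eps (lam *: (oneA - p)) t = lam *: c.
  have := Gq' (lam *: (oneA - p)) _ _ _ Ht.
  rewrite (Qm_cls X2 eps lam Hel (pc_comp X ha)) (Qm_cls X2 eps lam Hel (pc_comp X hc)).
  rewrite !subrr !subr0 !add0r addr0 mulr0 mulr1 scale0r Phi0 add0r.
  by apply: inj.
have Hs2 : starA (oneA - p) = oneA - p by case: (X2).
rewrite (QmE H eps lam Hel _ _ Hs2) in E1.
move/scalerI: E1 => /(_ Hl) E1.
pose x := t - c.
have hx : Pc mulA p 1 1 x.
  apply: (back11 X2); apply: (sym0 X2).
  rewrite /x (mulBr_ H (oneA - p) t c) (mulBl_ H t c (oneA - p)) addrACA -opprD E1.
  have [h1 h2] := pc_comp X hc.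
  by rewrite h1 h2 subrr subr0 scale0r scale1r addr0 subrr.
have ht : t = x + c by rewrite /x subrK.
clearbody x.
pose s := x - a.
have hs : Pc mulA p 1 1 s.
  have := pc_lin X (-1) ha hx; by rewrite scaleN1r addrC.
have hxs : x = s + a by rewrite /s subrK.
clearbody s.
have hcs := pc_star01 X hc.
have hss := pc_star11 X hs.
have K1 : forall y, Pc mulA p 1 0 y -> mulA s y = 0.
  move=> y hy.
  pose W := fun w => Fm mulA starA eps (oneA - p) (Qm mulA starA eps (lam *: p)
     (Fm mulA starA eps y w)).
  have WE : Phi (W t) = Phi (W a) + Phi (W c).
    exact: (Gf' _ _ _ _ (Gq' _ _ _ _ (Gf' _ _ _ _ Ht))).
  have Wadd : forall w w', W (w + w') = W w + W w'.
    by move=> w w'; rewrite /W (Fm_add H) (Qm_add H) (Fm_add H).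
  have Wc : W c = 0.
    rewrite /W {2}/Fm (Qm_add H) (Fm_add H).
    have h1 : Pc mulA p 0 0 (mulA c y) by apply: (pc_mul X hc hy); ring.
    have h2 : Pc mulA p 0 1 (eps *: mulA y (starA c)).
      by apply: (pc_scale X); apply: (pc_mul X hy hcs); ring.
    rewrite (Psi_cls X X2 eps lam Hel h1) (Psi_cls X X2 eps lam Hel h2).
    by rewrite !subrr ?add0r ?mulr0 ?scale0r ?(star0_ H) ?scaler0 ?rmorph0 ?mulr0 ?scale0r ?addr0.
  rewrite Wc Phi0 addr0 in WE; move/inj: WE.
  rewrite ht hxs !Wadd Wc addr0 => /(congr1 (fun w => w - W a)); rewrite /= addrK subrr => Ws.
  move: Ws; rewrite /W {2}/Fm.
  have -> : mulA y (starA s) = 0 by apply: (pc_mul0 X hy hss (k:=2)); [right; ring | left].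
  rewrite scaler0 addr0.
  have h2 : Pc mulA p 1 0 (mulA s y) by apply: (pc_mul X hs hy); ring.
  rewrite (Psi_cls X X2 eps lam Hel h2).
  rewrite subr0 addr0 rmorph1 mulr1 mulr1 scale1r.
  move/(z10 X eps (pc_scale X _ h2)); move/eqP; rewrite !scaler_eq0 (negPf Hl) /=.
  by move/eqP.
have K2 : forall v, Pc mulA p 0 1 v -> mulA v s = 0.
  move=> v hv.
  have hv' := pc_star01 X hv.
  pose W := fun w => Fm mulA starA eps p (Qm mulA starA eps v w).
  have WE : Phi (W t) = Phi (W a) + Phi (W c).
    exact: (Gf' _ _ _ _ (Gq' _ _ _ _ Ht)).
  have Wadd : forall w w', W (w + w') = W w + W w'.
    by move=> w w'; rewrite /W (Qm_add H) (Fm_add H).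
  have Wc : W c = 0.
    rewrite /W /Qm (Fm_add H).
    have h1 : Pc mulA p 1 0 (mulA v c) by apply: (pc_mul X hv hc); ring.
    have h2 : Pc mulA p 0 0 (eps *: mulA c (starA v)).
      by apply: (pc_scale X); apply: (pc_mul X hc hv'); ring.
    rewrite (Fm_cls X eps h1) (Fm_cls X eps h2).
    by rewrite rmorph0 mulr0 !scale0r !addr0.
  rewrite Wc Phi0 addr0 in WE; move/inj: WE.
  rewrite ht hxs !Wadd Wc addr0 => /(congr1 (fun w => w - W a)); rewrite /= addrK subrr => Ws.
  move: Ws; rewrite /W /Qm (Fm_add H).
  have h3 : Pc mulA p 1 0 (eps *: mulA s (starA v)).
    by apply: (pc_scale X); apply: (pc_mul X hs hv'); ring.
  rewrite (Fm_cls X eps h3) rmorph0 mulr0 !scale0r !addr0.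
  have h2 : Pc mulA p 0 1 (mulA v s) by apply: (pc_mul X hv hs); ring.
  rewrite (Fm_cls X eps h2) rmorph1 mulr1 scale1r.
  exact: (z01 X eps h2).
have s0 := prime_kill X Hpr Hp1 s hs K1 K2.
have xa : x = a by rewrite hxs s0 add0r.
by rewrite -Ht ht xa.
Qed.

Lemma altalg_comp {R : realType} {V : lmodType R[i]} {mul : V -> V -> V} {star : V -> V}
  {one p : V} (X : AltAlg mul star one p) : AltAlg mul star one (one - p).
Proof.
case: (X) => H Ha Hu Hp Hs; split => //.
- rewrite (mulBr_ H) !(mulBl_ H) (Hu one).1 (Hu p).2 (Hu p).1 Hp subrr subr0 //.
- have s1 : star one = one.
    have := (Hu (star one)).2; move/(congr1 star); rewrite (starM_ H) !(starK_ H).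
    by move=> h; rewrite -[LHS](Hu (star one)).2 h.
  by rewrite (starB_ H) s1 Hs.
Qed.

Lemma conji (R : realType) : (('i%C : R[i])^*) = - 'i%C.
Proof. rewrite /=. by apply/eqP; rewrite eq_complex /= oppr0 !eqxx. Qed.

Lemma L11 {R : realType} {V : lmodType R[i]} {mul : V -> V -> V} {star : V -> V}
  {one e : V} (X : AltAlg mul star one e) a : Pc mul e 1 1 (mul (mul e a) e).
Proof. by rewrite /Pc !scale1r (pflex X) (pL X) (pR X). Qed.

Lemma L10 {R : realType} {V : lmodType R[i]} {mul : V -> V -> V} {star : V -> V}
  {one e : V} (X : AltAlg mul star one e) a : Pc mul e 1 0 (mul (mul e a) (one - e)).
Proof.
case: (X) => H _ Hu _ _.
rewrite /Pc scale1r scale0r (mulBr_ H) (Hu _).2 (mulBr_ H) (mulBl_ H) (pL X).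
by rewrite (pflex X) (pL X) (pR X) subrr.
Qed.

Theorem claim2p1 (R : realType)
  (A : completeNormedModType R[i]) (mulA : A -> A -> A) (starA : A -> A) (oneA : A)
  (B : lmodType R[i]) (mulB : B -> B -> B) (starB : B -> B)
  (Phi : A -> B) (p1 : A) :
  alternative_Wstar_factor mulA starA oneA ->
  alternative_star_algebra mulB starB ->
  bijective Phi ->
  ((forall a b : A, Phi (mulA a b + mulA b (starA a)) =
                    mulB (Phi a) (Phi b) + mulB (Phi b) (starB (Phi a))) \/
   (forall a b : A, Phi (mulA a b - mulA b (starA a)) =
                    mulB (Phi a) (Phi b) - mulB (Phi b) (starB (Phi a)))) ->
  projection mulA starA p1 -> p1 != oneA ->
  let p2 := oneA - p1 in
  forall a11 b12 c21 d22 : A,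
    peirce mulA p1 p1 a11 -> peirce mulA p1 p2 b12 ->
    peirce mulA p2 p1 c21 -> peirce mulA p2 p2 d22 ->
    [/\ Phi (a11 + b12) = Phi a11 + Phi b12,
        Phi (a11 + c21) = Phi a11 + Phi c21,
        Phi (b12 + d22) = Phi b12 + Phi d22 &
        Phi (c21 + d22) = Phi c21 + Phi d22].
Proof.
move=> [[[HA HAa] _ _] Hpr _ Hu] [HB _] Hbij Hpres [p0 ps pp] Hp1 p2 a11 b12 c21 d22
  [a ->] [b ->] [c ->] [d ->].
have X1 : AltAlg mulA starA oneA p1 by split.
have X2 : AltAlg mulA starA oneA p2 := altalg_comp X1.
have X1' : AltAlg mulA starA oneA (oneA - p2) by rewrite /p2 subKr.
have E1 : p1 = oneA - p2 by rewrite /p2 subKr.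
have Hp2 : p2 != oneA.
  by apply: contra p0 => /eqP h; rewrite E1 h subrr.
have ha := L11 X1 a.
have hb := L10 X1 b.
have hc : Pc mulA p2 1 0 (mulA (mulA p2 c) p1) by rewrite {1}E1; exact: L10 X2 c.
have hd := L11 X2 d.
have hc1 : Pc mulA p1 0 1 (mulA (mulA p2 c) p1).
  by have := pc_comp X2 hc; rewrite -E1 subrr subr0.
have hb2 : Pc mulA p2 0 1 (mulA (mulA p1 b) p2).
  by have := pc_comp X1 hb; rewrite subrr subr0.
have [eps [lam [He Hl Hel Hpr']]] : exists eps lam : R[i], [/\ eps * eps = 1, lam != 0,
    eps * lam^* = lam &
    forall a b, Phi (mulA a b + eps *: mulA b (starA a)) =
     mulB (Phi a) (Phi b) + eps *: mulB (Phi b) (starB (Phi a))].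
  case: Hpres => Hpres.
  - exists 1, 1; split; first by rewrite mulr1.
    + exact: oner_neq0.
    + by rewrite rmorph1 mulr1.
    + by move=> x y; rewrite !scale1r.
  - exists (-1), 'i%C; split; first by rewrite mulrNN mulr1.
    + by rewrite eq_complex /= oner_eq0 andbF.
    + by rewrite conji mulrNN mul1r.
    + by move=> x y; rewrite !scaleN1r.
split.
- exact: (gen_i X1 X2 Hpr Hp1 HB Phi Hbij eps lam He Hl Hel Hpr' _ _ ha hb).
- exact: (gen_ii X1 X2 Hpr Hp1 HB Phi Hbij eps lam He Hl Hel Hpr' _ _ ha hc1).
- rewrite addrC [RHS]addrC.
  exact: (gen_ii X2 X1' Hpr Hp2 HB Phi Hbij eps lam He Hl Hel Hpr' _ _ hd hb2).
- rewrite addrC [RHS]addrC.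
  exact: (gen_i X2 X1' Hpr Hp2 HB Phi Hbij eps lam He Hl Hel Hpr' _ _ hd hc).
Qed.
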